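(* Let $n\geq 3$ and consider the $n$-cycle scenario. For every nondisturbing strongly contextual behavior $\{p_1,\dots,p_n\}$ there exist $k\in\{1,\dots,n\}$ and $(a_1,\dots,a_n)\in\{0,1\}^n$ (with $a_{n+1}:=a_1$) such that $\bar p_k(a_k,\lnot a_{k+1})=\bar p_k(\lnot a_k,a_{k+1})=1$ and $\bar p_k(a_k,a_{k+1})=\bar p_k(\lnot a_k,\lnot a_{k+1})=0$, and for every $i\neq k$, $\bar p_i(a_i,a_{i+1})=\bar p_i(\lnot a_i,\lnot a_{i+1})=1$ and $\bar p_i(a_i,\lnot a_{i+1})=\bar p_i(\lnot a_i,a_{i+1})=0$, where $\lnot x=1-x$.
   Context: The $n$-cycle scenario has measurements $M_1,\dots,M_n$ with outcomes in $\{0,1\}$ and contexts $\{M_i,M_{i+1}\}$, indices mod $n$. A behavior is a family of probability distributions $p_i$ on $\{0,1\}^2$, $p_i(x,y)$ the probability that $M_i=x$, $M_{i+1}=y$; it is nondisturbing if $\sum_y p_i(y,x)=\sum_y p_{i+1}(x,y)$ for all $i,x$. Set $\bar p_i(x,y)=1$ if $p_i(x,y)>0$ and $0$ otherwise. The behavior is strongly contextual if there is no $t\in\{0,1\}^n$ with $p_i(t_i,t_{i+1})>0$ for all $i$. *)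

(* Defs.v *)
From HB Require Import structures.
From mathcomp Require Import all_boot all_order all_algebra.
Set Implicit Arguments. Unset Strict Implicit. Unset Printing Implicit Defensive.
Import Order.TTheory GRing.Theory Num.Theory.
Local Open Scope ring_scope.

(* n-cycle scenario: measurements M_0..M_{n-1} indexed by 'I_n, outcomes bool
   (false = 0, true = 1); context i is {M_i, M_{i+1 mod n}}; the cyclic
   successor is fintype's [ordS] (value i.+1 %% n).
   A behavior is p : 'I_n -> bool -> bool -> R, p i x y = Prob(M_i = x, M_{i+1} = y). *)

Definition behavior (R : realFieldType) (n : nat) := 'I_n -> bool -> bool -> R.

Definition is_behavior (R : realFieldType) (n : nat) (p : behavior R n) : Prop :=
  forall i : 'I_n,
    (forall x y, 0 <= p i x y) /\ \sum_(x : bool) \sum_(y : bool) p i x y = 1.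

Definition nondisturbing (R : realFieldType) (n : nat) (p : behavior R n) : Prop :=
  forall (i : 'I_n) (x : bool),
    \sum_(y : bool) p i y x = \sum_(y : bool) p (ordS i) x y.

Definition pbar (R : realFieldType) (n : nat) (p : behavior R n)
  (i : 'I_n) (x y : bool) : bool := 0 < p i x y.

Definition strongly_contextual (R : realFieldType) (n : nat) (p : behavior R n) : Prop :=
  ~ exists t : 'I_n -> bool, forall i : 'I_n, 0 < p i (t i) (t (ordS i)).

(* Main.v *)
Require Import Defs.
From HB Require Import structures.
From mathcomp Require Import all_boot all_order all_algebra.
From mathcomp Require Import lra.
Import Order.TTheory GRing.Theory Num.Theory.

Lemma val_ordS n' (i : 'I_n'.+1) :
  val (ordS i) = if (val i < n')%N then (val i).+1 else 0%N.
Proof.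
rewrite /ordS /=; case: ifP => h.
  by rewrite modn_small.
have -> : val i = n' by have := ltn_ord i; rewrite ltnS leq_eqVlt h orbF => /eqP.
by rewrite modnn.
Qed.

Fixpoint pre (c : nat -> bool) (m : nat) : bool :=
  if m is m'.+1 then pre c m' (+) c m' else false.

Section Comb.
Variables (n' : nat) (S : 'I_n'.+1 -> bool -> bool -> bool) (c : 'I_n'.+1 -> bool).
Hypothesis Hm : forall i x, S i x (x (+) c i).
Hypothesis NG : ~ exists t : 'I_n'.+1 -> bool, forall i, S i (t i) (t (ordS i)).
Let cn k := c (inord k).

Lemma ival_lt (i : 'I_n'.+1) : (val i < n')%N = false -> val i = n'.
Proof. by move=> h; have := ltn_ord i; rewrite ltnS leq_eqVlt h orbF => /eqP. Qed.

Lemma parity : pre cn n'.+1 = true.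
Proof.
case hP: (pre cn n'.+1) => //; exfalso; apply: NG; exists (fun i => pre cn (val i)) => i.
rewrite val_ordS; case: ifP => hi /=.
  by rewrite /cn inord_val.
have ei := ival_lt _ hi.
have e1 : cn n' = c i by rewrite /cn; congr c; apply: val_inj; rewrite /= inordK ?ei.
move: hP; rewrite /= e1 ei.
by move=> h; have := Hm i (pre cn n'); rewrite h.
Qed.

Lemma exact j x y : S j x y -> x (+) y = c j.
Proof.
move=> Sxy; apply/eqP/negP => hne; apply: NG.
exists (fun i => pre cn (val i) (+) (val j < val i)%N (+) x (+) pre cn (val j)) => i.
have hy : y = x (+) ~~ c j by move: hne; case: (x) (y) (c j) => [] [] [].
have Hpar := parity; rewrite /= in Hpar.
rewrite val_ordS; case: ifP => hi /=.
  case: (eqVneq (val j) (val i)) => [e|ne] /=.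
    have eij : i = j by apply: val_inj.
    subst i; rewrite ltnn ltnSn /cn inord_val; move: Sxy; rewrite hy.
    by case: (x) (pre _ _) (c j) => [] [] [].
  have -> : (val j < (val i).+1)%N = (val j < val i)%N by rewrite ltnS leq_eqVlt (negbTE ne).
  have := Hm i (pre cn i (+) (val j < val i)%N (+) x (+) pre cn (val j)).
  by rewrite /cn inord_val; case: (pre _ _) (_ < _)%N (c i) (x) (pre _ (val j)) => [] [] [] [] [].
have ei := ival_lt _ hi.
have e1 : cn n' = c i by rewrite /cn; congr c; apply: val_inj; rewrite /= inordK ?ei.
have Hci : c i = ~~ pre cn n'.
  by move: Hpar; rewrite e1; case: (pre _ _) (c i) => [] [].
case: (eqVneq (val j) (val i)) => [e|ne].
  have eij : i = j by apply: val_inj.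
  subst i; rewrite ltnn /=; move: Sxy; rewrite hy Hci ei.
  by case: (x) (pre _ _) (c j) => [] [] [].
have lt : (val j < val i)%N by rewrite ltn_neqAle ne /= ei -ltnS ltn_ord.
rewrite lt /=.
have := Hm i (pre cn i (+) true (+) x (+) pre cn (val j)).
rewrite Hci ei.
by case: (pre _ n') (x) (pre _ (val j)) => [] [] [].
Qed.
End Comb.
Lemma walk_abs n' : forall (j : nat) (hj : (j < n'.+1)%N)
  (S : 'I_n'.+1 -> bool -> bool -> bool) (Pos : 'I_n'.+1 -> bool -> bool),
  (forall i v w, S i v w -> Pos (ordS i) w) ->
  (forall i v, Pos i v -> S i v (S i v true)) ->
  forall v, Pos (Ordinal hj) v -> ~~ Pos (Ordinal hj) (~~ v) ->
  exists t : 'I_n'.+1 -> bool, forall i, S i (t i) (t (ordS i)).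
Proof.
elim=> [|j IH] hj S Pos H1 H2 v Pv nPv.
  pose u := fix u (m : nat) : bool :=
    if m is m'.+1 then S (inord m') (u m') true else v.
  have inv : forall m, (m <= n')%N -> Pos (inord m) (u m).
    elim=> [|m IHm] hm.
      by have -> : (inord 0 : 'I_n'.+1) = Ordinal hj by apply: val_inj; rewrite /= inordK.
    have hm' : (m <= n')%N by apply: ltnW.
    have := H1 _ _ _ (H2 _ _ (IHm hm')).
    suff -> : ordS (inord m : 'I_n'.+1) = inord m.+1 by [].
    by apply: val_inj; rewrite val_ordS /= !inordK ?hm // ltnS ltnW.
  exists (fun i => u (val i)) => i.
  have Hi : Pos i (u i) by have := inv _ (ltn_ord i : (i <= n')%N); rewrite inord_val.
  rewrite val_ordS; case: ifP => hi /=.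
    by have := H2 _ _ Hi; rewrite inord_val.
  have := H2 _ _ Hi; set w := S i (u i) true => Sw.
  have := H1 _ _ _ Sw.
  have -> : ordS i = Ordinal hj.
    by apply: val_inj; rewrite val_ordS hi.
  move=> Pw; suff <- : w = v by [].
  by move: Pw Pv nPv; case: (w); case: (v) => //= ->.
have hj' : (j < n'.+1)%N by apply: ltnW.
have Ej : ordS (Ordinal hj') = Ordinal hj by apply: val_inj; rewrite val_ordS /= -ltnS hj.
have [t' Ht'] := IH hj' (fun i => S (ordS i)) (fun i => Pos (ordS i))
  (fun i v w h => H1 _ _ _ h) (fun i v h => H2 _ _ h) v ltac:(by rewrite /= Ej) ltac:(by rewrite /= Ej).
exists (fun i => t' (ord_pred i)) => i.
have := Ht' (ord_pred i); by rewrite ord_predK ordSK.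
Qed.

Lemma match4 (f : bool -> bool -> bool) :
  (f false false || f false true) -> (f true false || f true true) ->
  (f false false || f true false) -> (f false true || f true true) ->
  forall x, f x (x (+) ~~ (f false false && f true true)).
Proof.
case e1: (f false false); case e2: (f false true);
case e3: (f true false); case e4: (f true true) => //= _ _ _ _ [] /=;
by rewrite ?e1 ?e2 ?e3 ?e4.
Qed.

Lemma S_char n' (S : 'I_n'.+1 -> bool -> bool -> bool) c
  (Hm : forall i x, S i x (x (+) c i))
  (NG : ~ exists t : 'I_n'.+1 -> bool, forall i, S i (t i) (t (ordS i))) i x y :
  S i x y = (x (+) y == c i).
Proof.
case E: (S i x y); first by rewrite (@exact n' S c Hm NG i x y E) eqxx.
apply/esym/negbTE/negP => /eqP h.
by have := Hm i x; rewrite -h addKb E.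
Qed.

Local Open Scope ring_scope.

Theorem theorem5 (R : realFieldType) (n : nat) (hn : (3 <= n)%N)
  (p : behavior R n) :
  is_behavior p -> nondisturbing p -> strongly_contextual p ->
  exists (k : 'I_n) (a : 'I_n -> bool),
    [/\ pbar p k (a k) (~~ a (ordS k)) = true,
        pbar p k (~~ a k) (a (ordS k)) = true,
        pbar p k (a k) (a (ordS k)) = false
      & pbar p k (~~ a k) (~~ a (ordS k)) = false] /\
    forall i : 'I_n, i != k ->
      [/\ pbar p i (a i) (a (ordS i)) = true,
          pbar p i (~~ a i) (~~ a (ordS i)) = true,
          pbar p i (a i) (~~ a (ordS i)) = false
        & pbar p i (~~ a i) (a (ordS i)) = false].
Proof.
case: n hn p => [|n'] // hn p Hb Hnd Hsc.
pose Pos (i : 'I_n'.+1) (x : bool) := 0 < \sum_(y : bool) p i x y.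
have H1 : forall i v w, pbar p i v w -> Pos (ordS i) w.
  move=> i v w; rewrite /pbar /Pos -Hnd big_bool /=.
  have [hi _] := Hb i; have h1 := hi true w; have h2 := hi false w.
  by case: v => h; lra.
have H2 : forall i v, Pos i v -> pbar p i v (pbar p i v true).
  move=> i v; rewrite /Pos big_bool /=.
  case E: (pbar p i v true) => // hP; move: E; rewrite /pbar => /negbT.
  rewrite -leNgt => h; lra.
have HP : forall i x, Pos i x.
  move=> i x; apply/negPn/negP => nP.
  have Pn : Pos i (~~ x).
    have [hi hs] := Hb i; move: hs nP; rewrite /Pos big_bool /= -leNgt.
    by case: x; rewrite /=; lra.
  have Ei : Ordinal (ltn_ord i) = i by apply: val_inj.
  have [t Ht] := @walk_abs n' (val i) (ltn_ord i) (pbar p) Pos H1 H2 (~~ x)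
    ltac:(by rewrite Ei) ltac:(by rewrite Ei negbK).
  by apply: Hsc; exists t.
have Col : forall i y, pbar p i false y || pbar p i true y.
  move=> i y; have := HP (ordS i) y; rewrite /Pos -Hnd big_bool /= /pbar => hs.
  apply/orP; case: (ltrP 0 (p i true y)) => h1; [by right|left].
  lra.
pose c i := ~~ (pbar p i false false && pbar p i true true).
have Hm : forall i x, pbar p i x (x (+) c i).
  move=> i; apply: match4.
  - by have := H2 _ _ (HP i false); case E: (pbar p i false true) => h; rewrite ?h ?orbT.
  - by have := H2 _ _ (HP i true); case E: (pbar p i true true) => h; rewrite ?h ?orbT.
  - exact: Col.
  - exact: Col.
have NG : ~ exists t : 'I_n'.+1 -> bool, forall i, pbar p i (t i) (t (ordS i)) by [].
have Sc := @S_char n' (pbar p) c Hm NG.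
have Hpar := @parity n' (pbar p) c Hm NG.
pose cn (k : nat) := c (inord k).
exists ord_max, (fun i => pre cn (val i)).
have Eo : val (ordS (ord_max : 'I_n'.+1)) = 0%N by rewrite val_ordS ltnn.
have Hck : c ord_max = ~~ pre cn n'.
  have Em : (inord n' : 'I_n'.+1) = ord_max by apply: val_inj; rewrite /= inordK.
  by move: Hpar; rewrite /= Em; case: (pre _ _) (c ord_max) => [] [].
split.
  by rewrite !Sc Eo /= Hck; case: (pre cn n').
move=> i hi.
have hi' : (val i < n')%N.
  by rewrite ltn_neqAle -ltnS ltn_ord andbT; apply: contra hi => /eqP h; apply/eqP/val_inj.
have Ev : val (ordS i) = (val i).+1 by rewrite val_ordS hi'.
rewrite !Sc Ev /= /cn inord_val; move: (pre _ _) (c i) => a b; by case: a; case: b.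
Qed.
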